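(* Let $\Gamma$ be a countable group acting affinely on $\mathbb{R}^n$, let $\mathsf W\subseteq\mathbb{R}^n$ be a connected open subset, and let $h:\mathsf W\to\mathbb{R}^n$ be a $C^1$ map preserving $\Gamma$-orbits (i.e. $h(x)\in\Gamma\cdot x$ for all $x\in\mathsf W$). Then there is $\gamma\in\Gamma$, acting by $\gamma\cdot x=A_\gamma x+b_\gamma$, such that $h(x)=A_\gamma x+b_\gamma$ for all $x\in\mathsf W$. *)

(* Defs.v *)
From HB Require Import structures.
From mathcomp Require Import all_boot all_order all_algebra.
From mathcomp Require Import all_classical all_reals all_analysis.
Import numFieldNormedType.Exports.
Set Implicit Arguments.
Unset Strict Implicit.
Unset Printing Implicit Defensive.
Local Open Scope ring_scope.
Local Open Scope classical_set_scope.

Definition affine_action (R : realType) (n : nat) (G : groupType)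
  (A : G -> 'M[R]_n) (b : G -> 'cV[R]_n) : Prop :=
  A 1%g = 1%:M /\ b 1%g = 0 /\
  (forall g h : G, A (g * h)%g = A g *m A h /\ b (g * h)%g = A g *m b h + b g).

Definition C1_on (R : realType) (n : nat) (W : set 'cV[R]_n)
  (h : 'cV[R]_n -> 'cV[R]_n) : Prop :=
  (forall x, W x -> forall v : 'cV[R]_n, derivable h x v) /\
  (forall v : 'cV[R]_n, forall x, W x -> {for x, continuous ('D_v h)}).

(* Main.v *)
Require Import Defs.
From HB Require Import structures.
From mathcomp Require Import all_boot all_order all_algebra.
From mathcomp Require Import all_classical all_reals all_analysis.
Import numFieldNormedType.Exports.
Local Open Scope ring_scope.
Local Open Scope classical_set_scope.
From mathcomp.algebra_tactics Require Import ring lra.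
Import Order.TTheory GRing.Theory Num.Theory.

HB.instance Definition _ (R : realType) m n :=
  Uniform_isComplete.Build 'M[R]_(m, n) (@mx_complete R m n).

Section S. Variable R : realType.
Lemma baire_cover (U : completeNormedModType R) (C : nat -> set U) (D : set U) :
  (forall k, closed (C k)) -> open D -> D !=set0 ->
  D `<=` \bigcup_k C k ->
  exists k z (e : R), 0 < e /\ ball z e `<=` C k.
Proof.
move=> cC oD D0 DC; apply: contrapT => nball.
have dO k : open (~` C k) /\ dense (~` C k).
  split; first exact: closed_openC.
  move=> O [z Oz] oO; apply/set0P/eqP => OC.
  apply: nball; exists k, z.
  have /nbhs_ballP[e e0 He] : nbhs z O by exact: open_nbhs_nbhs.
  exists e; split => // y /He Oy; apply: contrapT => nCy.
  by have : (O `&` ~` C k) y by []; rewrite OC.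
have := @Baire R U (fun k => ~` C k) dO D D0 oD.
case=> z [Dz Iz]; have [k _ Ckz] := DC z Dz.
exact: (Iz k I Ckz).
Qed.
Lemma uncount_itv (a b : R) (S : set R) : a < b -> countable S ->
  exists t, a < t < b /\ ~ S t.
Proof.
move=> ab /countable_injP[f finj].
pose C k := [set t | S t /\ f t = k].
have cC k : closed (C k).
  have [[t0 [St0 ft0]]|] := pselect (exists t, S t /\ f t = k).
    have -> : C k = [set t0].
      apply/seteqP; split => [t [St ft]|t ->] //=.
      by apply: finj; rewrite ?inE // ft ft0.
    exact/accessible_closed_set1/hausdorff_accessible/Rhausdorff.
  move=> nex; have -> : C k = set0.
    by apply/seteqP; split => // t [St ft]; apply: nex; exists t.
  exact: closed0.
apply: contrapT => nt.
have := @baire_cover R^o C [set t | a < t < b] cC.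
case.
- by rewrite -set_itvoo; exact: itv_open.
- by exists ((a + b) / 2); rewrite /= !midf_lt.
- move=> t abt; apply: contrapT => nSt; apply: nt; exists t; split => //.
  by move=> St; apply: nSt; exists (f t).
move=> k [z [e [e0 He]]].
have Hz : C k z by apply: He; exact: ballxx.
have Hz' : C k (z + e / 2).
  apply: He; rewrite -ball_normE /= opprD addrA subrr add0r normrN.
  by rewrite ger0_norm ?divr_ge0 ?ltW // ltr_pdivrMr // ltr_pMr // ltr1n.
have : z = z + e / 2.
  by apply: finj; rewrite ?inE; [exact: Hz.1|exact: Hz'.1| rewrite Hz.2 Hz'.2].
by move/eqP; rewrite -subr_eq0 opprD addrA subrr add0r oppr_eq0 mulf_eq0 invr_eq0 (gt_eqF e0) pnatr_eq0.
Qed.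
Lemma countable_const (T : topologicalType) (S : set T) m k
  (f : T -> 'M[R]_(m, k)) :
  connected S -> (forall x, S x -> {for x, continuous f}) ->
  countable (f @` S) -> forall x y, S x -> S y -> f x = f y.
Proof.
move=> cS cf cnt.
suff H : forall i j x y, S x -> S y -> ~ f x i j < f y i j.
  move=> x y Sx Sy; apply/matrixP => i j.
  apply/eqP; rewrite eq_le !leNgt; apply/andP; split; apply/negP.
  - exact: H.
  - exact: H.
move=> i j x y Sx Sy lt.
pose fr := fun z => f z i j.
have cfr : {within S, continuous fr}.
  apply: continuous_in_subspaceT => z; rewrite inE => Sz.
  exact: (continuous_comp (cf z Sz) (@coord_continuous R m k i j (f z))).
have /connected_intervalP itv := connected_continuous_connected cS cfr.
have cfr' : countable (fr @` S).
  have -> : fr @` S = (fun M : 'M[R]_(m, k) => M i j) @` (f @` S).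
    by rewrite image_comp.
  exact: (sub_countable (card_image_le _ _) cnt).
have [t [/andP[t1 t2] nt]] := @uncount_itv _ _ _ lt cfr'.
apply: nt; apply: (itv (fr x) (fr y)); [by exists x|by exists y|].
by rewrite !ltW.
Qed.
Lemma countableU T (A B : set T) : countable A -> countable B -> countable (A `|` B).
Proof.
move=> cA cB.
have -> : A `|` B = \bigcup_(b in [set: bool]) (if b then A else B).
  apply/seteqP; split => [x [Ax|Bx]|x [[] _ Hx]]; [by exists true|by exists false|by left|by right].
apply: bigcup_countable => //; try exact: countableP.
by move=> [] _.
Qed.
Variable n : nat.
Lemma no_accum (phi : R -> 'cV[R]_n) (t : R) (c : 'cV[R]_n) (P : R -> Prop) :
  derivable phi t 1 ->
  (forall d, 0 < d -> exists s, t < s < t + d /\ P s) ->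
  (forall s, P s -> phi s - phi t = (s - t) *: c) ->
  'D_1 phi t = c.
Proof.
move=> dphi Hacc Hl.
have Hc : (fun h : R => h^-1 *: ((phi \o shift t) (h *: 1) - phi t)) @ 0^' --> 'D_1 phi t.
  exact: dphi.
apply: contrapT => /eqP neq.
have e0 : 0 < `|'D_1 phi t - c| by rewrite normr_gt0 subr_eq0.
move/cvgrPdist_lt: Hc => /(_ _ e0).
rewrite /dnbhs /within /= => Hn. have {Hn}/nbhs_ballP[d d0 Hd] := Hn.
have [s [/andP[ts std] Ps]] := Hacc d d0.
have := Hd (s - t) _ _.
rewrite /= /shift /= -ball_normE /= sub0r normrN gtr0_norm ?subr_gt0 //.
rewrite ltrBlDl => /(_ std); rewrite subr_eq0 => /(_ (negbT (gt_eqF ts))).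
have -> : (s - t)%:A + t = s by rewrite /GRing.scale /= mulr1 subrK.
rewrite Hl // scalerA mulVf ?scale1r ?ltxx //.
by rewrite subr_eq0 gt_eqF.
Qed.
Lemma line_lemma (G : Type) (p q : G -> 'cV[R]_n) (phi dphi : R -> 'cV[R]_n)
  (a b : R) :
  countable [set: G] -> a < b ->
  (forall t, a < t < b -> derivable phi t 1 /\ 'D_1 phi t = dphi t) ->
  (forall t, a < t < b -> {for t, continuous dphi}) ->
  (forall t, a < t < b -> exists g, phi t = p g + t *: q g) ->
  exists g, forall t, a < t < b -> phi t = p g + t *: q g.
Proof.
move=> cG ab Hd Hc Hcov.
pose I := [set t : R | a < t < b].
pose N g := [set t | I t /\ phi t = p g + t *: q g /\ dphi t != q g].
have Nsep g t : N g t -> exists d, 0 < d /\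
    forall s, t < s < t + d -> phi s != p g + s *: q g.
  move=> [It [Et nd]]; apply: contrapT => Hn.
  have : 'D_1 phi t = q g.
    apply: (@no_accum phi t (q g) (fun s => phi s = p g + s *: q g)).
    - exact: (Hd t It).1.
    - move=> d d0; apply: contrapT => Hn2; apply: Hn; exists d; split => //.
      move=> s sts; apply/negP => /eqP Es; apply: Hn2; exists s; split => //.
    - by move=> s ->; rewrite Et opprD addrACA subrr add0r scalerBl.
  by rewrite (Hd t It).2 => E; move: nd; rewrite E eqxx.
have cN g : countable (N g).
  have /choice[F HF] : forall t, exists r : rat, N g t ->
      t < ratr r /\ forall s, t < s <= ratr r -> phi s != p g + s *: q g.
    move=> t; have [Nt|nNt] := pselect (N g t); last by exists 0.
    have [d [d0 Hs]] := Nsep g t Nt.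
    have /rat_in_itvoo[r] : t < t + d by rewrite ltrDl.
    rewrite in_itv /= => /andP[r1 r2]; exists r => _; split => //.
    move=> s /andP[s1 s2]; apply: Hs; rewrite s1 /=; exact: le_lt_trans s2 r2.
  apply/countable_injP; exists (fun t => choice.pickle (F t)).
  move=> t1 t2; rewrite !inE => N1 N2 /(pcan_inj (@choice.pickleK _)) E.
  have key u v : N g u -> N g v -> F u = F v -> ~ u < v.
    move=> Nu Nv Fuv uv.
    have [u1 u2] := HF u Nu.
    have [v1 _] := HF v Nv.
    have := u2 v; rewrite uv /= Fuv (ltW v1) => /(_ isT).
    by rewrite Nv.2.1 eqxx.
  have [lt12|lt21|//] := ltgtP t1 t2.
  - by case: (key _ _ N1 N2 E lt12).
  - by case: (key _ _ N2 N1 (esym E) lt21).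
pose NN := \bigcup_(g in [set: G]) N g.
have cNN : countable NN by apply: bigcup_countable.
have Iinterval : connected I.
  apply/connected_intervalP => x y /andP[x1 x2] /andP[y1 y2] z /andP[z1 z2].
  by rewrite /I /= (lt_le_trans x1 z1) (le_lt_trans z2 y2).
have gen (f : R -> 'cV[R]_n) (r : G -> 'cV[R]_n) :
    (forall t, I t -> {for t, continuous f}) ->
    (forall t g, I t -> phi t = p g + t *: q g -> dphi t = q g -> f t = r g) ->
    forall x y, I x -> I y -> f x = f y.
  move=> fc fr; apply: countable_const => //.
  apply: (@sub_countable _ _ _ (r @` setT `|` f @` NN)); last first.
    apply: countableU.
    - exact: (sub_countable (card_image_le _ _) cG).
    - exact: (sub_countable (card_image_le _ _) cNN).
  apply: subset_card_le => _ [t It <-].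
  have [g Eg] := Hcov t It.
  have [Eq|Neq] := eqVneq (dphi t) (q g).
  - by left; exists g => //; rewrite (fr t g It Eg Eq).
  - by right; exists t => //; exists g => //.
have phic t : I t -> {for t, continuous phi}.
  move=> It; apply: differentiable_continuous; apply/derivable1_diffP.
  exact: (Hd t It).1.
have dconst := gen dphi q Hc (fun t g _ _ E => E).
have cconst := gen (fun t => phi t - t *: dphi t) p.
have [t0 [It0 nN]] := @uncount_itv _ _ _ ab cNN.
have [g0 E0] := Hcov t0 It0.
have D0 : dphi t0 = q g0.
  apply/eqP; apply: contrapT => nd; apply: nN; exists g0 => //.
  by split => //; split => //; apply/negP.
exists g0 => t It.
have Dt : dphi t = q g0 by rewrite (dconst t t0 It It0) D0.
have := cconst _ _ t t0 It It0.
rewrite E0 D0 Dt addrK => <-; last first.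
- by move=> u g _ -> ->; rewrite addrK.
- move=> u Iu; apply: continuousB; first exact: phic.
  apply: continuousZ; first exact: cvg_id.
  exact: Hc.
by rewrite subrK.
Qed.
Lemma Dval (h : 'cV[R]_n -> 'cV[R]_n) (x w P Q : 'cV[R]_n) (d : R) : 0 < d ->
  (forall t, `|t| < d -> h (x + t *: w) = P + t *: Q) ->
  derivable h x w /\ 'D_w h x = Q.
Proof.
move=> d0 H.
have hx : h x = P by have := H 0; rewrite normr0 d0 scale0r addr0 scale0r addr0; apply.
have HQ : (fun s : R => s^-1 *: ((h \o shift x) (s *: w) - h x)) @ 0^' --> Q.
  apply: cvg_near_cst; rewrite /dnbhs /within /=.
  apply/nbhs_ballP; exists d => // s; rewrite -ball_normE /= sub0r normrN => sd s0.
  by rewrite /shift /= (addrC (s *: w) x) H // hx addrC addKr scalerA mulVf // scale1r.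
split; first exact: cvgP HQ.
exact: cvg_lim HQ.
Qed.
End S.

Lemma scale_cancel (K : fieldType) (V : lmodType K) (e : K) (u w : V) :
  e != 0 -> e *: u = e *: w -> u = w.
Proof.
move=> e0 E; have := congr1 (fun z => e^-1 *: z) E.
by rewrite !scalerA mulVf // !scale1r.
Qed.

Section Main.
Variables (R : realType) (n : nat) (G : groupType) (A : G -> 'M[R]_n) (b : G -> 'cV[R]_n)
  (W : set 'cV[R]_n) (h : 'cV[R]_n -> 'cV[R]_n).
Hypotheses (cG : countable [set: G]) (oW : open W) (cW : connected W)
  (C1 : C1_on W h) (Hcov : forall x, W x -> exists g : G, h x = A g *m x + b g).

Lemma ballW x : W x -> exists r : R, 0 < r /\ forall y, `|y - x| < r -> W y.
Proof.
move=> Wx; have /nbhs_ballP[r r0 Hr] : nbhs x W by exact: open_nbhs_nbhs.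
exists r; split => // y yx; apply: Hr; rewrite -ball_normE /= distrC //.
Qed.

Lemma lineW x w (d : R) : 0 < d -> (forall t, `|t| < d -> W (x + t *: w)) ->
  exists g, forall t, `|t| < d -> h (x + t *: w) = (A g *m x + b g) + t *: (A g *m w).
Proof.
move=> d0 HW.
have [g Hg] : exists g, forall t, - d < t < d ->
    h (x + t *: w) = (A g *m x + b g) + t *: (A g *m w).
  apply: (@line_lemma R n G (fun g => A g *m x + b g) (fun g => A g *m w)
    (fun t => h (x + t *: w)) (fun t => 'D_w h (x + t *: w)) (- d) d cG).
- by rewrite gtrN.
- move=> t td.
  have Wt : W (x + t *: w) by apply: HW; rewrite ltr_norml.
  have E : (fun s : R => s^-1 *: (((fun t => h (x + t *: w)) \o shift t) (s *: 1) - h (x + t *: w)))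
         = (fun s : R => s^-1 *: ((h \o shift (x + t *: w)) (s *: w) - h (x + t *: w))).
    apply/funext => s; rewrite /shift /= -[s *: 1]/(s * 1) mulr1.
    by rewrite scalerDl addrCA.
  by rewrite /derivable /derive E; split => //; exact: (C1.1 _ Wt w).
- move=> t td.
  have Wt : W (x + t *: w) by apply: HW; rewrite ltr_norml.
  apply: (@continuous_comp _ _ _ (fun t : R => x + t *: w) (fun z => 'D_w h z) t
    _ (C1.2 w _ Wt)).
  apply: continuousD; first exact: cvg_cst.
  apply: continuousZr_tmp; exact: cvg_id.
- move=> t td.
  have Wt : W (x + t *: w) by apply: HW; rewrite ltr_norml.
  have [g Eg] := Hcov _ Wt; exists g.
  by rewrite Eg mulmxDr scalemxAr addrAC.
exists g => t td; apply: Hg; rewrite -ltr_norml //.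
Qed.


Lemma small_dir x w (r : R) : 0 < r -> (forall y, `|y - x| < r -> W y) ->
  forall t, `|t| < r / (`|w| + 1) -> W (x + t *: w).
Proof.
move=> r0 Hr t tr; apply: Hr; rewrite addrC addKr normrZ.
have w1 : 0 < `|w| + 1 by rewrite ltr_wpDl.
rewrite ltr_pdivlMr // in tr; apply: le_lt_trans tr.
by rewrite ler_wpM2l // lerDl.
Qed.

Lemma Dlin x w (r : R) : 0 < r -> (forall y, `|y - x| < r -> W y) ->
  exists g, 'D_w h x = A g *m w /\ h x = A g *m x + b g.
Proof.
move=> r0 Hr.
have d0 : 0 < r / (`|w| + 1) by rewrite divr_gt0 // ltr_wpDl.
have [g Hg] := @lineW x w _ d0 (@small_dir x w r r0 Hr).
exists g; split; first exact: (@Dval R n h x w _ _ _ d0 Hg).2.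
by have := Hg 0; rewrite normr0 d0 !scale0r !addr0; apply.
Qed.

Lemma dconst w x y : W x -> W y -> 'D_w h x = 'D_w h y.
Proof.
move=> Wx Wy.
apply: (@countable_const R _ W n 1 (fun z => 'D_w h z) cW _ _ x y Wx Wy).
- by move=> z Wz; exact: (C1.2 w z Wz).
- apply: (@sub_countable _ _ _ ((fun g => A g *m w) @` setT)); last first.
    exact: (sub_countable (card_image_le _ _) cG).
  apply: subset_card_le => _ [z Wz <-].
  have [r [r0 Hr]] := @ballW z Wz.
  by have [g [Eg _]] := @Dlin z w r r0 Hr; exists g.
Qed.

Lemma loc x (r : R) : 0 < r -> (forall y, `|y - x| < r -> W y) ->
  forall w, `|w| < r / 2 -> h (x + w) = h x + 'D_w h x.
Proof.
move=> r0 Hr w wr.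
have d0 : (0 : R) < 2 by [].
have HW : forall t, `|t| < 2 -> W (x + t *: w).
  move=> t t2; apply: Hr; rewrite addrC addKr normrZ.
  have := normr_ge0 w; have := normr_ge0 t; nra.
have [g Hg] := @lineW x w 2 d0 HW.
rewrite (@Dval R n h x w _ _ 2 d0 Hg).2.
have := Hg 1; rewrite normr1 ltr1n scale1r => /(_ isT) ->.
by have := Hg 0; rewrite normr0 !scale0r !addr0 => /(_ d0) ->; rewrite scale1r.
Qed.

Lemma hom x (r : R) : 0 < r -> (forall y, `|y - x| < r -> W y) ->
  forall k w, 'D_(k *: w) h x = k *: 'D_w h x.
Proof.
move=> r0 Hr k w.
have d0 : 0 < r / (`|w| + 1) by rewrite divr_gt0 // ltr_wpDl.
set d := r / (`|w| + 1) in d0 *.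
have [g Hg] := @lineW x w _ d0 (@small_dir x w r r0 Hr).
rewrite (@Dval R n h x w _ _ _ d0 Hg).2.
have d'0 : 0 < d / (`|k| + 1) by rewrite divr_gt0 // ltr_wpDl.
suff H : forall t, `|t| < d / (`|k| + 1) ->
    h (x + t *: (k *: w)) = (A g *m x + b g) + t *: (k *: (A g *m w)).
  by rewrite (@Dval R n h x (k *: w) _ _ _ d'0 H).2.
move=> t td.
rewrite scalerA Hg; first by rewrite scalerA mulrC.
rewrite normrM; rewrite ltr_pdivlMr ?ltr_wpDl // in td.
apply: le_lt_trans td; rewrite ler_wpM2l //; lra.
Qed.

Lemma add x (r : R) : 0 < r -> (forall y, `|y - x| < r -> W y) ->
  forall v w, 'D_(v + w) h x = 'D_v h x + 'D_w h x.
Proof.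
move=> r0 Hr v w.
have Wx : W x by apply: Hr; rewrite subrr normr0.
set S := `|v| + `|w| + 1.
have S0 : 0 < S by rewrite /S ltr_wpDl // addr_ge0.
set e := r / (4 * S).
have e0 : 0 < e by rewrite divr_gt0 // mulr_gt0.
have eS : e * S = r / 4 by rewrite /e; field; rewrite lt0r_neq0.
have hv := normr_ge0 v; have hw := normr_ge0 w.
have ev : `|e *: v| < r / 4 by rewrite normrZ gtr0_norm //; rewrite /S in eS S0 *; nra.
have ew : `|e *: w| < r / 4 by rewrite normrZ gtr0_norm //; rewrite /S in eS S0 *; nra.
have hev := normr_ge0 (e *: v); have hew := normr_ge0 (e *: w).
have evw : `|e *: v + e *: w| < r / 2.
  apply: le_lt_trans (ler_normD _ _) _; lra.
have E1 := @loc x r r0 Hr _ evw.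
have ev2 : `|e *: v| < r / 2 by lra.
have E2 := @loc x r r0 Hr _ ev2.
have r20 : 0 < r / 2 by lra.
have Hy : forall z, `|z - (x + e *: v)| < r / 2 -> W z.
  move=> z zr; apply: Hr.
  have -> : z - x = (z - (x + e *: v)) + e *: v by rewrite opprD addrA subrK.
  apply: le_lt_trans (ler_normD _ _) _; lra.
have ew2 : `|e *: w| < r / 2 / 2 by lra.
have E3 := @loc (x + e *: v) (r / 2) r20 Hy _ ew2.
have Wy : W (x + e *: v) by apply: Hy; rewrite subrr normr0.
rewrite (@dconst _ (x + e *: v) x Wy Wx) in E3.
rewrite addrA E3 E2 -addrA in E1.
move/addrI: E1.
rewrite -scalerDr !(@hom x r r0 Hr) -scalerDr => E.
exact: (esym (@scale_cancel R _ e _ _ (lt0r_neq0 e0) E)).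
Qed.

Lemma mx_cont (N : 'M[R]_n) : continuous (fun z : 'cV[R]_n => N *m z).
Proof.
have E : (fun z : 'cV[R]_n => N *m z) = (fun z => \sum_(j < n) z j 0 *: col j N).
  apply/funext => z; apply/matrixP => i k.
  rewrite !mxE summxE; apply: eq_bigr => j _.
  by rewrite !mxE (ord1 k) mulrC.
rewrite E; apply: continuous_big; first exact: add_continuous.
move=> j _ z; apply: (@continuousZr_tmp _ _ _ (fun z : 'cV[R]_n => z j 0) (col j N) z).
exact: (@coord_continuous R n 1 j 0).
Qed.

Lemma closed_ker (N : 'M[R]_n) : closed [set z : 'cV[R]_n | N *m z = 0].
Proof.
have -> : [set z : 'cV[R]_n | N *m z = 0] = (fun z => N *m z) @^-1` [set 0] by [].
apply: preimage_closed.
  by move=> z _; exact: mx_cont.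
exact/accessible_closed_set1/hausdorff_accessible/norm_hausdorff.
Qed.

Lemma linmx x (r : R) : 0 < r -> (forall y, `|y - x| < r -> W y) ->
  forall w, 'D_w h x = (\matrix_(i, j) ('D_(delta_mx j 0) h x) i 0) *m w.
Proof.
move=> r0 Hr w.
have c0 : 'D_0 h x = 0.
  by have := @hom x r r0 Hr 0 0; rewrite !scale0r.
have cD := @add x r r0 Hr.
have cZ := @hom x r r0 Hr.
have Ew : w = \sum_(j < n) w j 0 *: delta_mx j 0.
  rewrite {1}(matrix_sum_delta w); apply: eq_bigr => j _.
  by rewrite big_ord1.
rewrite {1}Ew.
have -> : 'D_(\sum_(j < n) w j 0 *: delta_mx j 0) h x =
    \sum_(j < n) w j 0 *: 'D_(delta_mx j 0) h x.
  apply: (big_ind2 (fun u v => 'D_u h x = v)) => [//|u1 v1 u2 v2 E1 E2|j _].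
  - by rewrite cD E1 E2.
  - by rewrite cZ.
apply/matrixP => i k; rewrite !mxE summxE; apply: eq_bigr => j _.
by rewrite !mxE (ord1 k) mulrC.
Qed.

Lemma locaff x (r : R) : 0 < r -> (forall y, `|y - x| < r -> W y) ->
  exists g, forall y, `|y - x| < r / 2 -> h y = A g *m y + b g.
Proof.
move=> r0 Hr.
set M := \matrix_(i, j) ('D_(delta_mx j 0) h x) i 0.
have HM := @linmx x r r0 Hr.
have /countable_injP[f finj] := cG.
pose C k := [set w : 'cV[R]_n | exists g, f g = k /\ (A g - M) *m w = 0 /\
  h x = A g *m x + b g].
have cC k : closed (C k).
  have [[g0 [fg0 Hg0]]|nex] := pselect (exists g, f g = k /\ h x = A g *m x + b g).
    have -> : C k = [set z : 'cV[R]_n | (A g0 - M) *m z = 0].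
      apply/seteqP; split => [z [g [fg [Hz _]]]|z Hz] /=.
        have -> // : g0 = g by apply: finj; rewrite ?inE // fg fg0.
      by exists g0.
    exact: closed_ker.
  have -> : C k = set0.
    by apply/seteqP; split => // z [g [fg [_ Hg]]]; apply: nex; exists g.
  exact: closed0.
have [k [z [e [e0 He]]]] := @baire_cover R _ C setT cC openT
  (ex_intro _ 0 I) (fun w _ =>
    let: ex_intro g (conj Eg Hg) := @Dlin x w r r0 Hr in
    ex_intro2 _ _ (f g) I (ex_intro _ g (conj erefl
      (conj (eq_trans (mulmxBl _ _ _) (eq_trans (congr1 (fun u => u - M *m w) (esym Eg))
        (eq_trans (congr1 (fun u => 'D_w h x - u) (esym (HM w))) (subrr _)))) Hg)))).
have [g [fg [Hz Hx]]] := He z (ballxx _ e0).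
have Hker (u : 'cV[R]_n) : (A g - M) *m u = 0.
  set s := e / (2 * (`|u| + 1)).
  have u1 : 0 < `|u| + 1 by rewrite ltr_wpDl.
  have s0 : 0 < s by rewrite divr_gt0 // mulr_gt0.
  have : C k (z + s *: u).
    apply: He; rewrite -ball_normE /= opprD addrA subrr add0r normrN normrZ.
    rewrite gtr0_norm // /s.
    have hu := normr_ge0 u.
    rewrite -mulrA (mulrC _ `|u|) mulrA ltr_pdivrMr ?mulr_gt0 //.
    rewrite ltr_pM2l //; lra.
  case=> g' [fg' [Hz' _]].
  have gg' : g' = g by apply: finj; rewrite ?inE // fg fg'.
  rewrite gg' mulmxDr Hz add0r -scalemxAr in Hz'.
  by move/eqP: Hz'; rewrite scaler_eq0 (gt_eqF s0) /= => /eqP.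
exists g => y yr.
have -> : y = x + (y - x) by rewrite addrC subrK.
rewrite (@loc x r r0 Hr _ yr) HM Hx.
have : (A g - M) *m (y - x) = 0 := Hker _.
rewrite mulmxBl => /eqP; rewrite subr_eq0 => /eqP <-.
by rewrite -addrA (addrC (b g)) addrA -mulmxDr.
Qed.

Lemma agree g g' x (r : R) : 0 < r ->
  (forall y, `|y - x| < r -> A g *m y + b g = A g' *m y + b g') ->
  forall y, A g *m y + b g = A g' *m y + b g'.
Proof.
move=> r0 H y.
have Hx : A g *m x + b g = A g' *m x + b g' by apply: H; rewrite subrr normr0.
set v := y - x.
set s := r / (2 * (`|v| + 1)).
have u1 : 0 < `|v| + 1 by rewrite ltr_wpDl.
have s0 : 0 < s by rewrite divr_gt0 // mulr_gt0.
have Hs : A g *m (x + s *: v) + b g = A g' *m (x + s *: v) + b g'.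
  apply: H; rewrite addrC addKr normrZ gtr0_norm // /s.
  have hv := normr_ge0 v.
  rewrite -mulrA (mulrC _ `|v|) mulrA ltr_pdivrMr ?mulr_gt0 //.
  rewrite ltr_pM2l //; lra.
have E1 (N : 'M[R]_n) (c : 'cV[R]_n) :
    N *m (x + s *: v) + c = (N *m x + c) + s *: (N *m v).
  by rewrite mulmxDr -scalemxAr addrAC.
rewrite !E1 Hx in Hs.
move/addrI/eqP: Hs; rewrite -subr_eq0 -scalerBr scaler_eq0 (gt_eqF s0) /=.
rewrite subr_eq0 => /eqP Ev.
have -> : y = x + v by rewrite /v addrC subrK.
have E2 (N : 'M[R]_n) (c : 'cV[R]_n) : N *m (x + v) + c = (N *m x + c) + N *m v.
  by rewrite mulmxDr addrAC.
by rewrite !E2 Hx Ev.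
Qed.

Lemma ball_in (y z : 'cV[R]_n) (e : R) : `|z - y| < e ->
  exists rho : R, 0 < rho /\ forall u, `|u - z| < rho -> `|u - y| < e.
Proof.
move=> zy; exists (e - `|z - y|); split; first by rewrite subr_gt0.
move=> u uz; have -> : u - y = (u - z) + (z - y) by rewrite addrA subrK.
apply: le_lt_trans (ler_normD _ _) _; rewrite ltrBrDr in uz; exact: uz.
Qed.

Lemma final : exists g, forall x, W x -> h x = A g *m x + b g.
Proof.
have [[xs Wxs]|nW] := pselect (exists x, W x); last first.
  by exists 1%g => x Wx; case: nW; exists x.
have [r [r0 Hr]] := @ballW xs Wxs.
have [gs Hgs] := @locaff xs r r0 Hr.
pose B := [set y | exists e : R, 0 < e /\
  forall z, `|z - y| < e -> W z /\ h z = A gs *m z + b gs].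
have BW : B `<=` W by move=> y [e [e0 He]]; apply: (He y _).1; rewrite subrr normr0.
have oB : open B.
  rewrite openE => y [e [e0 He]]; apply/nbhs_ballP; exists e => // z.
  rewrite -ball_normE /= distrC => yz.
  have [rho [rho0 Hrho]] := @ball_in y z e yz.
  by exists rho; split => // u uz; apply: He; apply: Hrho.
pose E := [set y | W y /\ ~ B y].
have oE : open E.
  rewrite openE => y [Wy nBy].
  have [r' [r'0 Hr']] := @ballW y Wy.
  have [g Hg] := @locaff y r' r'0 Hr'.
  have r20 : 0 < r' / 2 by lra.
  apply/nbhs_ballP; exists (r' / 2) => // z; rewrite -ball_normE /= => yz.
  rewrite distrC in yz.
  have zr' : `|z - y| < r' by lra.
  split; first exact: Hr'.
  move=> [e [e0 He]]; apply: nBy.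
  have [rho [rho0 Hrho]] := @ball_in y z (r' / 2) yz.
  have m0 : 0 < Num.min e rho by rewrite lt_min e0 rho0.
  have Hag := @agree g gs z (Num.min e rho) m0.
  have {}Hag : forall u, A g *m u + b g = A gs *m u + b gs.
    apply: Hag => u; rewrite lt_min => /andP[ue urho].
    by rewrite -(He u ue).2 Hg // Hrho.
  exists (r' / 2); split => // u uy; split; first by apply: Hr'; lra.
  by rewrite Hg // Hag.
have BE : B = W `&` ~` E.
  apply/seteqP; split => [y By|y [Wy nEy]]; first by split; [apply: BW|move=> [_]].
  by apply: contrapT => nBy; apply: nEy.
have B0 : B !=set0.
  exists xs; exists (r / 2); split; first lra.
  move=> z zr; split; last exact: Hgs.
  by apply: Hr; lra.
have BeqW : B = W.
  apply: cW => //.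
  - by exists B => //; rewrite setIidr.
  - by exists (~` E) => //; exact: open_closedC.
exists gs => x Wx.
have : B x by rewrite BeqW.
by move=> [e [e0 He]]; apply: (He x _).2; rewrite subrr normr0.
Qed.
End Main.

Theorem lemma1 (R : realType) (n : nat) (G : groupType)
  (A : G -> 'M[R]_n) (b : G -> 'cV[R]_n)
  (W : set 'cV[R]_n) (h : 'cV[R]_n -> 'cV[R]_n) :
  countable [set: G] ->
  affine_action A b ->
  open W -> connected W ->
  C1_on W h ->
  (forall x, W x -> exists g : G, h x = A g *m x + b g) ->
  exists g : G, forall x, W x -> h x = A g *m x + b g.
Proof.
move=> cG _ oW cW C1 Hcov.
exact: (@final R n G A b W h cG oW cW C1 Hcov).
Qed.
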